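(* In the first-best problem, denote by $x$ the Agent's reservation value, and let $\lambda_{Lag}(x)$ be the Lagrange multiplier, solution of $G(\lambda_{Lag})=x$ where $$G(\lambda_{Lag})=\int_0^\infty e^{-\lambda s}\left(U\Big((U')^{-1}\big(\tfrac{1}{\lambda_{Lag}}e^{(\lambda-\delta)s}\big)\Big)-h\Big(\big(\tfrac{h'}{\varphi'}\big)^{-1}\big(\tfrac{1}{\lambda_{Lag}}e^{(\lambda-\delta)s}\big)\vee 0\Big)\right)ds,$$ and set $R_t^*(x)=(U')^{-1}\big(\tfrac{1}{\lambda_{Lag}(x)}e^{(\lambda-\delta)t}\big)$, $A_t^*(x)=(\tfrac{h'}{\varphi'})^{-1}\big(\tfrac{1}{\lambda_{Lag}(x)}e^{(\lambda-\delta)t}\big)\vee0$ and $H_t(x)=\varphi(A^*_t(x))-R^*_t(x)$. In the non-degenerate case $\tau^*\neq0$ (the optimal stopping time of the first-best problem is not $0$): (1) for each $t$, the optimal rent $R^*_t(x)$ is increasing and the optimal effort $A^*_t(x)$ is decreasing with respect to $x$; (2) for each $t$, the function $x\mapsto H_t(x)$ is decreasing.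
   Context: First-best problem: maximize $\mathbb{E}[\int_0^\tau e^{-\delta s}(\varphi(A_s)-R_s)ds-e^{-\delta\tau}\xi]$ over quadruplets $(R,\tau,\xi,A)$ with $R,A\ge0$ progressively measurable with respect to the Brownian filtration $\mathbb{F}$, $\tau$ an $\mathbb{F}$-stopping time, $\xi\ge0$ $\mathcal{F}_\tau$-measurable (with suitable integrability), subject to the reservation constraint $\mathbb{E}[\int_0^\tau e^{-\lambda s}(U(R_s)-h(A_s))ds+e^{-\lambda\tau}U(\xi)]\ge x$, where $x>0$. Standing assumptions: $\varphi:[0,\infty)\to[0,\infty)$ is $C^2$, strictly concave, bounded, increasing, $\varphi(0)=0$, $\varphi'(0)>0$; $U:[0,\infty)\to[0,\infty)$ is $C^2$, strictly concave, increasing, $U(0)=0$, $U'(\infty)=0$, $U'(0)=\infty$; $h:[0,\infty)\to[0,\infty)$ is $C^2$, strictly convex, increasing, $h(0)=0$, $h'(0)>0$; $\lambda\ge\delta>0$. The notation $(h'/\varphi')^{-1}(y)\vee0$ means the inverse of $h'/\varphi'$ at $y$ when defined and nonnegative, and $0$ otherwise. *)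

(* Defs.v *)
From HB Require Import structures.
From mathcomp Require Import all_boot all_order all_algebra.
From mathcomp Require Import all_classical all_reals all_analysis.
Set Implicit Arguments. Unset Strict Implicit. Unset Printing Implicit Defensive.
Import Order.TTheory GRing.Theory Num.Theory.
Import numFieldNormedType.Exports.
Local Open Scope classical_set_scope.
Local Open Scope ring_scope.

Section FirstBest.
Variable R : realType.

Definition strictly_concave_on_nonneg (f : R -> R) : Prop :=
  forall x y t, 0 <= x -> 0 <= y -> x != y -> 0 < t < 1 ->
    t * f x + (1 - t) * f y < f (t * x + (1 - t) * y).

Definition strictly_convex_on_nonneg (f : R -> R) : Prop :=
  forall x y t, 0 <= x -> 0 <= y -> x != y -> 0 < t < 1 ->
    f (t * x + (1 - t) * y) < t * f x + (1 - t) * f y.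

Definition increasing_on_nonneg (f : R -> R) : Prop :=
  forall x y, 0 <= x -> x <= y -> f x <= f y.

(* C^2 on [0,+oo[ : f is the restriction of a C^2 function on R
   (equivalent, by the extension theorem for half-lines). *)
Definition C2 (f : R -> R) : Prop :=
  (forall x, derivable f x 1) /\ (forall x, derivable (derive1 f) x 1) /\
  continuous (derive1n 2 f).

Definition phi_assumptions (phi : R -> R) : Prop :=
  (C2 phi /\ strictly_concave_on_nonneg phi /\
      (exists M, forall x, 0 <= x -> phi x <= M) /\
      increasing_on_nonneg phi /\
      (forall x, 0 <= x -> 0 <= phi x) /\
      phi 0 = 0 /\ 0 < (derive1 phi) 0).

Definition h_assumptions (h : R -> R) : Prop :=
  (C2 h /\ strictly_convex_on_nonneg h /\ increasing_on_nonneg h /\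
      (forall x, 0 <= x -> 0 <= h x) /\ h 0 = 0 /\ 0 < (derive1 h) 0).

Definition U_assumptions (U : R -> R) : Prop :=
  ((forall x, 0 < x -> derivable U x 1 /\ derivable (derive1 U) x 1
                        /\ {for x, continuous (derive1n 2 U)}) /\
      (U x @[x --> 0^'+] --> U 0) /\
      strictly_concave_on_nonneg U /\
      increasing_on_nonneg U /\
      (forall x, 0 <= x -> 0 <= U x) /\
      U 0 = 0 /\
      (((derive1 U) x @[x --> 0^'+] --> +oo) /\ ((derive1 U) x @[x --> +oo] --> 0))).

Definition Uprime_inv (U : R -> R) (y : R) : R :=
  xget 0 [set r | 0 < r /\ (derive1 U) r = y].

(* (h'/phi')^{-1}(y) \/ 0 : the point a >= 0 with h'(a)/phi'(a) = y when
   it exists, and 0 otherwise. *)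
Definition hphi_inv0 (h phi : R -> R) (y : R) : R :=
  xget 0 [set a | 0 <= a /\ (derive1 h) a / (derive1 phi) a = y].

Definition marg (lam delta l s : R) : R := expR ((lam - delta) * s) / l.

Definition Gintegrand (U h phi : R -> R) (lam delta l s : R) : R :=
  expR (- lam * s) *
    (U (Uprime_inv U (marg lam delta l s))
     - h (hphi_inv0 h phi (marg lam delta l s))).

Definition Gfun (U h phi : R -> R) (lam delta l : R) : \bar R :=
  \int[@lebesgue_measure R]_(s in `[(0:R), +oo[%classic)
     (Gintegrand U h phi lam delta l s)%:E.

Definition Rstar (U : R -> R) (lam delta l t : R) : R :=
  Uprime_inv U (marg lam delta l t).

Definition Astar (h phi : R -> R) (lam delta l t : R) : R :=
  hphi_inv0 h phi (marg lam delta l t).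

Definition Hfun (U h phi : R -> R) (lam delta l t : R) : R :=
  phi (Astar h phi lam delta l t) - Rstar U lam delta l t.

End FirstBest.

(* Main.v *)
Require Import Defs.
From HB Require Import structures.
From mathcomp Require Import all_boot all_order all_algebra.
From mathcomp Require Import all_classical all_reals all_analysis.
Import Order.TTheory GRing.Theory Num.Theory.
Local Open Scope ring_scope.
Import numFieldNormedType.Exports.
From mathcomp Require Import lra ring.
Local Open Scope classical_set_scope.

Section Aux.
Set Implicit Arguments.
Variable R : realType.

Definition segc (f : R -> R) (x y : R) :=
  forall t : R, 0 < t < 1 -> f x + t * (f y - f x) <= f (x + t * (y - x)).
Definition dq (f : R -> R) (x d : R) :=
  (fun h => h^-1 * (f (h + x) - f x)) @ 0^' --> d.
Lemma tangent (f : R -> R) (x y d : R) :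
  (forall t, 0 < t < 1 -> f x + t * (f y - f x) <= f (x + t * (y - x))) ->
  (fun h => h^-1 * (f (h + x) - f x)) @ 0^' --> (d : R) ->
  f y - f x <= d * (y - x).
Proof.
move=> cc cv.
have [->|ne] := eqVneq y x; first by rewrite !subrr mulr0.
rewrite leNgt; apply/negP => lt.
set e := y - x.
have e0 : e != 0 by rewrite subr_eq0.
have ae0 : 0 < `|e| by rewrite normr_gt0.
set eps := (f y - f x - d * e) / `|e|.
have eps0 : 0 < eps by rewrite divr_gt0 // subr_gt0.
have := @cvgr_dist_lt _ _ _ _ (dnbhs_filter (0:R)) _ _ cv _ eps0.
rewrite near_withinE => H0.
have [del /= del0 Hdel] := (nbhs_normP (0:R^o) _).1 H0.
set t := Num.min (1/2 : R) (del / (2 * `|e|)).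
have t0 : 0 < t by rewrite lt_min; apply/andP; split; [lra|apply: divr_gt0 => //; rewrite mulr_gt0].
have t1 : t < 1 by rewrite gt_min; apply/orP; left; lra.
have tle : t <= del / (2 * `|e|) by rewrite ge_min lexx orbT.
set h := t * e.
have h0 : h != 0 by rewrite mulf_neq0 // gt_eqF.
have hd : `|0 - h| < del.
  rewrite sub0r normrN normrM (gtr0_norm t0).
  have : t * `|e| <= del / (2 * `|e|) * `|e| by rewrite ler_pM2r.
  have -> : del / (2 * `|e|) * `|e| = del / 2.
    by field; rewrite gt_eqF.
  lra.
have := Hdel h hd h0 => /=.
have := cc t (introT andP (conj t0 t1)).
rewrite -/e (addrC h x) -/h.
set K := f (x + h) - f x.
move=> cK hk.
have kE : h^-1 * K * e = K / t.
  by rewrite /h; field; rewrite e0 gt_eqF.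
have H1 : f y - f x <= K / t.
  by rewrite ler_pdivlMr // mulrC; rewrite /K; lra.
have H2 : `|d - h^-1 * K| * `|e| < f y - f x - d * e.
  by rewrite -ltr_pdivlMr.
rewrite -normrM mulrBl kE in H2.
have := ler_norm (- (d * e - K / t)); rewrite normrN.
lra.
Qed.

Lemma der_cvg (f : R -> R) x : derivable f x 1 -> dq f x (derive1 f x).
Proof.
rewrite /derivable /derive1 /dq.
have -> : (fun h : R => h^-1 *: ((f \o shift x) (h *: (1:R)) - f x)) =
   (fun h => h^-1 * (f (h + x) - f x)).
  by apply: funext => h /=; rewrite /shift /= -[h *: 1]/(h * 1) mulr1.
by move=> H; apply: cvgP H.
Qed.

Lemma der_cont (f : R -> R) x : derivable f x 1 -> {for x, continuous f}.
Proof. by move=> /derivable1_diffP/differentiable_continuous. Qed.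

Lemma segc_sc (f : R -> R) x y : strictly_concave_on_nonneg f -> 0 <= x -> 0 <= y ->
  segc f x y.
Proof.
move=> sc x0 y0 t /andP[t0 t1].
have [->|ne] := eqVneq y x; first by rewrite !subrr !mulr0 !addr0.
have := sc y x t y0 x0 ne; rewrite t0 t1 => /(_ isT).
have -> : t * y + (1 - t) * x = x + t * (y - x) by ring.
have -> : t * f y + (1 - t) * f x = f x + t * (f y - f x) by ring.
exact: ltW.
Qed.

Lemma segc_sv (f : R -> R) x y : strictly_convex_on_nonneg f -> 0 <= x -> 0 <= y ->
  segc (fun z => - f z) x y.
Proof.
move=> sc x0 y0 t /andP[t0 t1].
have [->|ne] := eqVneq y x; first by rewrite !subrr !mulr0 !addr0.
have := sc y x t y0 x0 ne; rewrite t0 t1 => /(_ isT).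
have -> : t * y + (1 - t) * x = x + t * (y - x) by ring.
move=> H; have : f x + t * (f y - f x) = t * f y + (1 - t) * f x by ring.
lra.
Qed.

Lemma dq_neg (f : R -> R) x d : dq f x d -> dq (fun z => - f z) x (- d).
Proof.
rewrite /dq => H.
have -> : (fun h => h^-1 * (- f (h + x) - - f x)) = (fun h => - (h^-1 * (f (h + x) - f x))).
  by apply: funext => h; ring.
exact: cvgN.
Qed.

Lemma der_mono (f : R -> R) x y d1 d2 : segc f x y -> segc f y x ->
  dq f x d1 -> dq f y d2 -> x < y -> d2 <= d1.
Proof.
move=> sxy syx c1 c2 xy.
have h1 := @tangent f x y d1 sxy c1.
have h2 := @tangent f y x d2 syx c2.
have yx : 0 < y - x by rewrite subr_gt0.
nra.
Qed.


Lemma phi_dmono (phi : R -> R) : phi_assumptions phi ->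
  forall a b, 0 <= a -> a <= b -> derive1 phi b <= derive1 phi a.
Proof.
move=> [[d1 _] [sc _]] a b a0 ab.
have [->|ne] := eqVneq a b; first exact: lexx.
have b0 : 0 <= b by apply: le_trans ab.
apply: (@der_mono (phi) a b).
- exact: segc_sc.
- exact: segc_sc.
- exact: der_cvg.
- exact: der_cvg.
- by rewrite lt_neqAle ne ab.
Qed.

Lemma h_dmono (h : R -> R) : h_assumptions h ->
  forall a b, 0 <= a -> a <= b -> derive1 h a <= derive1 h b.
Proof.
move=> [[d1 _] [sc _]] a b a0 ab.
have [->|ne] := eqVneq a b; first exact: lexx.
have b0 : 0 <= b by apply: le_trans ab.
rewrite -lerN2.
apply: (@der_mono (fun z => - h z) a b).
- exact: segc_sv.
- exact: segc_sv.
- exact/dq_neg/der_cvg.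
- exact/dq_neg/der_cvg.
- by rewrite lt_neqAle ne ab.
Qed.

Lemma U_dmono (U : R -> R) : U_assumptions U ->
  forall a b, 0 < a -> a <= b -> derive1 U b <= derive1 U a.
Proof.
move=> [dU [_ [sc _]]] a b a0 ab.
have [->|ne] := eqVneq a b; first exact: lexx.
have b0 : 0 < b by apply: lt_le_trans ab.
apply: (@der_mono (U) a b).
- by apply: segc_sc => //; apply: ltW.
- by apply: segc_sc => //; apply: ltW.
- by apply: der_cvg; case: (dU a a0).
- by apply: der_cvg; case: (dU b b0).
- by rewrite lt_neqAle ne ab.
Qed.

Lemma phi_tan (phi : R -> R) : phi_assumptions phi ->
  forall a y, 0 <= a -> 0 <= y -> phi y - phi a <= derive1 phi a * (y - a).
Proof.
move=> [[d1 _] [sc _]] a y a0 y0.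
apply: (@tangent phi a y); first exact: segc_sc.
exact: der_cvg.
Qed.

Lemma phi_dpos (phi : R -> R) : phi_assumptions phi ->
  forall a, 0 <= a -> 0 < derive1 phi a.
Proof.
move=> hp a a0.
have hp' := hp; move: hp' => [_ [sc [_ [inc _]]]].
rewrite ltNge; apply/negP => H.
have a1 : 0 <= a + 1 by lra.
have a2 : 0 <= a + 2 by lra.
have t1 := phi_tan hp _ _ a0 a1.
have t2 := phi_tan hp _ _ a0 a2.
rewrite (_ : a + 1 - a = 1) in t1; last by ring.
rewrite (_ : a + 2 - a = 2) in t2; last by ring.
have i1 := inc a (a + 1) a0 (ltac:(lra)).
have i2 := inc a (a + 2) a0 (ltac:(lra)).
have ne : a != a + 2 by apply/eqP; lra.
have h1 : (0 : R) < 1/2 by lra.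
have h2 : (1/2 : R) < 1 by lra.
have h12 := introT andP (conj h1 h2).
have := sc a (a + 2) (1/2) a0 a2 ne h12.
rewrite (_ : 1/2 * a + (1 - 1/2) * (a + 2) = a + 1); last by field.
move=> H3.
have i3 := inc (a + 1) (a + 2) a1 (ltac:(lra)).
lra.
Qed.

Lemma xget_cases (P : set R) : P (xget 0 P) \/ ((forall x, ~ P x) /\ xget 0 P = 0).
Proof. by case: xgetP => [x _ Px|nP]; [left|right]. Qed.

Lemma h_dpos (h : R -> R) : h_assumptions h -> forall a, 0 <= a -> 0 < derive1 h a.
Proof.
move=> hh a a0; have hh' := hh; move: hh' => [_ [_ [_ [_ [_ q0]]]]].
apply: lt_le_trans q0 _; exact: h_dmono.
Qed.

Lemma g_mono (phi h : R -> R) : phi_assumptions phi -> h_assumptions h ->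
  forall a b, 0 <= a -> a <= b ->
  derive1 h a / derive1 phi a <= derive1 h b / derive1 phi b.
Proof.
move=> hp hh a b a0 ab.
have b0 : 0 <= b by apply: le_trans ab.
have pa := phi_dpos hp _ a0; have pb := phi_dpos hp _ b0.
have qa := h_dpos hh _ a0.
have pab := phi_dmono hp _ _ a0 ab; have qab := h_dmono hh _ _ a0 ab.
rewrite ler_pdivlMr // mulrAC ler_pdivrMr //.
nra.
Qed.

Lemma g_cont (phi h : R -> R) : phi_assumptions phi -> h_assumptions h ->
  forall a, 0 <= a -> {for a, continuous (fun x => derive1 h x / derive1 phi x)}.
Proof.
move=> hp hh a a0.
have hp' := hp; move: hp' => [[_ [d2p _]] _].
have hh' := hh; move: hh' => [[_ [d2h _]] _].
apply: cvgM; first exact: der_cont.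
apply: cvgV; first by rewrite gt_eqF // phi_dpos.
exact: der_cont.
Qed.

Lemma g_unb (phi h : R -> R) : phi_assumptions phi -> h_assumptions h ->
  forall Y, exists b, 0 <= b /\ Y <= derive1 h b / derive1 phi b.
Proof.
move=> hp hh Y.
have hp' := hp; move: hp' => [_ [_ [[M hM] [_ [_ [p00 _]]]]]].
have tan0 a : 0 < a -> a * derive1 phi a <= M.
  move=> a0; have := phi_tan hp a 0 (ltW a0) (lexx _).
  have := hM a (ltW a0); rewrite p00; lra.
have M0 : 0 < M.
  have := tan0 1 ltr01; have := phi_dpos hp 1 ler01; lra.
set q0 := derive1 h 0.
have q0p : 0 < q0 by apply: h_dpos hh 0 (lexx _).
set b := 1 + `|Y| * M / q0.
have Yn : 0 <= `|Y| by [].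
have b1 : 1 <= b.
  rewrite /b lerDl; apply: divr_ge0; last exact: ltW.
  by apply: mulr_ge0 => //; exact: ltW.
have b0 : 0 < b by lra.
exists b; split; first exact: ltW.
have pb := phi_dpos hp b (ltW b0).
have qb : q0 <= derive1 h b by apply: h_dmono => //; exact: ltW.
rewrite ler_pdivlMr //.
have e1 : `|Y| * (b * derive1 phi b) <= `|Y| * M by apply: ler_wpM2l => //; exact: tan0.
have E : q0 * b = q0 + `|Y| * M by rewrite /b; field; rewrite gt_eqF.
have YY : Y <= `|Y| by apply: ler_norm.
have H1 : (`|Y| * derive1 phi b - q0) * b < 0 by lra.
rewrite pmulr_llt0 // in H1.
have H2 : Y * derive1 phi b <= `|Y| * derive1 phi b by rewrite ler_pM2r.
lra.
Qed.

Lemma hinv_ge0 (h phi : R -> R) y : 0 <= hphi_inv0 h phi y.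
Proof.
rewrite /hphi_inv0.
by case: (xget_cases [set a | 0 <= a /\ derive1 h a / derive1 phi a = y]) => [[]//|[_ ->]].
Qed.

Lemma hinv_mono (phi h : R -> R) : phi_assumptions phi -> h_assumptions h ->
  forall y1 y2, y1 <= y2 -> hphi_inv0 h phi y1 <= hphi_inv0 h phi y2.
Proof.
move=> hp hh y1 y2 ley.
have [->|ne] := eqVneq y1 y2; first exact: lexx.
have lt : y1 < y2 by rewrite lt_neqAle ne ley.
set g := fun x => derive1 h x / derive1 phi x.
rewrite /hphi_inv0.
case: (xget_cases [set a | 0 <= a /\ derive1 h a / derive1 phi a = y1]);
  last by move=> [_ ->]; apply: hinv_ge0.
set a := xget _ _ => -[a0 ga].
case: (xget_cases [set a | 0 <= a /\ derive1 h a / derive1 phi a = y2]).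
  set b := xget _ _ => -[b0 gb].
  rewrite leNgt; apply/negP => ba.
  have := g_mono hp hh _ _ b0 (ltW ba); rewrite ga gb; lra.
move=> [nP _]; exfalso.
have [bb [bb0 gbb]] := g_unb hp hh y2.
have abb : a < bb.
  rewrite ltNge; apply/negP => bba.
  have := g_mono hp hh _ _ bb0 bba; rewrite ga; lra.
have cg : {within `[a, bb], continuous g}.
  apply: continuous_in_subspaceT => x; rewrite inE /= in_itv /= => /andP[ax _].
  apply: g_cont => //; exact: le_trans ax.
have := IVT (ltW abb) cg.
rewrite /g ga.
have -> : Num.min y1 (derive1 h bb / derive1 phi bb) = y1.
  by apply/min_idPl; lra.
have -> : Num.max y1 (derive1 h bb / derive1 phi bb) = derive1 h bb / derive1 phi bb.
  by apply/max_idPr; lra.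
move=> /(_ y2); rewrite (ltW lt) gbb => /(_ isT) [c]; rewrite in_itv /= => /andP[ac _] gc.
apply: (nP c); split => //; exact: le_trans ac.
Qed.

Lemma U_exists (U : R -> R) : U_assumptions U ->
  forall y, 0 < y -> exists r, 0 < r /\ derive1 U r = y.
Proof.
move=> hU y y0.
have hU' := hU; move: hU' => [dU [_ [_ [_ [_ [_ [lim0 liminf]]]]]]].
have : \forall x \near 0^'+, 0 < x /\ y < derive1 U x.
  near=> x; split; near: x; first exact: nbhs_right_gt.
  exact: ((cvgryPgt _).1 lim0 y).
move=> /filter_ex [a [a0 ua]].
have : \forall x \near +oo, 0 < x /\ derive1 U x < y.
  near=> x; split; near: x; first by apply: nbhs_pinfty_gt; rewrite num_real.
  exact: (cvgr_lt _ liminf y y0).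
move=> /filter_ex [b [b0 ub]].
have ab : a < b.
  rewrite ltNge; apply/negP => ba.
  have := U_dmono hU _ _ b0 ba; lra.
have cg : {within `[a, b], continuous (derive1 U)}.
  apply: continuous_in_subspaceT => x; rewrite inE /= in_itv /= => /andP[ax _].
  have x0 : 0 < x by apply: lt_le_trans ax.
  by case: (dU x x0) => _ [/der_cont + _].
have := IVT (ltW ab) cg.
have -> : Num.min (derive1 U a) (derive1 U b) = derive1 U b.
  by apply/min_idPr; lra.
have -> : Num.max (derive1 U a) (derive1 U b) = derive1 U a.
  by apply/max_idPl; lra.
move=> /(_ y); rewrite (ltW ub) (ltW ua) => /(_ isT) [c]; rewrite in_itv /= => /andP[ac _] gc.
exists c; split => //; exact: lt_le_trans ac.
Unshelve. all: by end_near.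
Qed.

Lemma Uinv_spec (U : R -> R) : U_assumptions U ->
  forall y, 0 < y -> 0 < Uprime_inv U y /\ derive1 U (Uprime_inv U y) = y.
Proof.
move=> hU y y0; rewrite /Uprime_inv.
case: (xget_cases [set r | 0 < r /\ derive1 U r = y]) => [//|[nP _]].
have [r [r0 ur]] := U_exists hU _ y0.
by exfalso; apply: (nP r).
Qed.

Lemma Uinv_lt (U : R -> R) : U_assumptions U ->
  forall y1 y2, 0 < y1 -> y1 < y2 -> Uprime_inv U y2 < Uprime_inv U y1.
Proof.
move=> hU y1 y2 y10 lt.
have [r10 ur1] := Uinv_spec hU _ y10.
have [r20 ur2] := Uinv_spec hU _ (lt_trans y10 lt).
rewrite ltNge; apply/negP => le.
have := U_dmono hU _ _ r10 le; rewrite ur1 ur2; lra.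
Qed.

Lemma Uinv_le (U : R -> R) : U_assumptions U ->
  forall y1 y2, 0 < y1 -> y1 <= y2 -> Uprime_inv U y2 <= Uprime_inv U y1.
Proof.
move=> hU y1 y2 y10 le.
have [->|ne] := eqVneq y1 y2; first exact: lexx.
by apply: ltW; apply: Uinv_lt => //; rewrite lt_neqAle ne le.
Qed.
Lemma int_mono (D : set R) (f g : R -> R) :
  (forall x, D x -> f x <= g x) ->
  (\int[@lebesgue_measure R]_(x in D) (f x)%:E <=
   \int[@lebesgue_measure R]_(x in D) (g x)%:E)%E.
Proof.
move=> fg; rewrite /integral /=.
have pt : forall x, ((fun x => (f x)%:E) \_ D x <= (fun x => (g x)%:E) \_ D x)%E.
  move=> x; rewrite /patch; case: ifPn => // /set_mem Dx.
  by rewrite lee_fin fg.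
apply: leeB; apply: le_ereal_sup => _ [hh Hh <-]; exists hh => //= x.
  apply: le_trans (Hh x) _; rewrite !funeposE; exact: (le_max2 (pt x) (lexx _)).
apply: le_trans (Hh x) _; rewrite !funenegE; apply: le_max2 => //; rewrite leeN2; exact: pt.
Qed.
End Aux.

Theorem proposition3p4 (R : realType) (U h phi : R -> R) (lam delta : R)
  (hphi : phi_assumptions phi) (hh : h_assumptions h) (hU : U_assumptions U)
  (hdelta : 0 < delta) (hlam : delta <= lam)
  (x1 x2 l1 l2 : R) (hx1 : 0 < x1) (hx12 : x1 < x2)
  (hl1 : 0 < l1) (hl2 : 0 < l2)
  (hG1 : Gfun U h phi lam delta l1 = x1%:E)
  (hG2 : Gfun U h phi lam delta l2 = x2%:E) :
  forall t : R, 0 <= t ->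
    [/\ Rstar U lam delta l1 t < Rstar U lam delta l2 t,
        Astar h phi lam delta l2 t <= Astar h phi lam delta l1 t &
        Hfun U h phi lam delta l2 t < Hfun U h phi lam delta l1 t].
Proof.
have hU' := hU; move: hU' => [_ [_ [_ [incU _]]]].
have hh' := hh; move: hh' => [_ [_ [inch _]]].
have hp' := hphi; move: hp' => [_ [_ [_ [incp _]]]].
have mpos l s : 0 < l -> 0 < marg lam delta l s.
  by move=> l0; rewrite /marg divr_gt0 // expR_gt0.
have mle l l' s : 0 < l -> l <= l' -> marg lam delta l' s <= marg lam delta l s.
  move=> l0 ll; rewrite /marg ler_pM2l ?expR_gt0 // lef_pV2 ?posrE //.
  exact: lt_le_trans ll.
have mlt l l' s : 0 < l -> l < l' -> marg lam delta l' s < marg lam delta l s.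
  move=> l0 ll; rewrite /marg ltr_pM2l ?expR_gt0 // ltf_pV2 ?posrE //.
  exact: lt_trans ll.
have key : l1 < l2.
  rewrite ltNge; apply/negP => l21.
  suff : (x2%:E <= x1%:E)%E by rewrite lee_fin; lra.
  rewrite -hG1 -hG2 /Gfun; apply: int_mono => s _.
  rewrite /Gintegrand ler_pM2l ?expR_gt0 //.
  have y10 := mpos l1 s hl1.
  have y12 := mle l2 l1 s hl2 l21.
  have [r0 _] := Uinv_spec hU _ (mpos l2 s hl2).
  have u1 := incU _ _ (ltW r0) (Uinv_le hU _ _ y10 y12).
  have h1 := inch _ _ (@hinv_ge0 R h phi _) (hinv_mono hphi hh _ _ y12).
  lra.
move=> t t0.
have y2lt := mlt l1 l2 t hl1 key.
have y20 := mpos l2 t hl2.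
have Rlt : Rstar U lam delta l1 t < Rstar U lam delta l2 t.
  exact: Uinv_lt.
have Ale : Astar h phi lam delta l2 t <= Astar h phi lam delta l1 t.
  exact: (hinv_mono hphi hh _ _ (ltW y2lt)).
split => //.
rewrite /Hfun.
have := incp _ _ (@hinv_ge0 R h phi _) Ale.
rewrite /Astar; lra.
Qed.
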